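(* Let $f:[c_0,c_N]\to[c_0,c_N]$ satisfy properties P1–P6 with contraction pieces $X_1,\dots,X_N$ and slope $\lambda$, and suppose that every atom of generation $1$ of $f$ contains at most one point of $\Delta_f=\{c_1,\dots,c_{N-1}\}$. Then there exists a well-cutting orbit $\{\xi_r\}_{r\in\mathbb{N}}$ of $f$ such that, for any map $g$ constructed from it as below, every atom of generation $1$ of $g$ contains at most one point of $\Delta_g$. Construction of $g$: $\phi(x)=x+\sum_{n\geqslant1,\ \xi_n<x}\lambda^n$ on $[c_0,c_N]$; $G_r:=(\phi(\xi_r),\phi(\xi_r)+\lambda^r]$ for $r\geqslant1$; $\Delta_g:=\phi(\Delta_f\cup\{\xi_0\})$; $g:[\phi(c_0),\phi(c_N)]\to[\phi(c_0),\phi(c_N)]$ is any map with $g(y)=\phi\circ f\circ\phi^{-1}(y)$ for $y\in\phi([c_0,c_N])\setminus\Delta_g$ and $g(y)=\lambda(y-\phi(\xi_r))+\phi(\xi_{r+1})$ for $y\in G_r$, $r\geqslant1$; its contraction pieces are $Y_1=[d_0,d_1)$, $Y_j=(d_{j-1},d_j)$ ($1<j<N+1$), $Y_{N+1}=(d_N,d_{N+1}]$, where $d_0<\dots<d_{N+1}$ are the points of $\phi(\{c_0,\dots,c_N\}\cup\{\xi_0\})$.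
   Context: Setting: $N\geqslant2$, $c_0<\dots<c_N$, $X=[c_0,c_N]$, $X_1=[c_0,c_1)$, $X_i=(c_{i-1},c_i)$ ($1<i<N$), $X_N=(c_{N-1},c_N]$; $f_i$ the continuous extension of $f|_{X_i}$ to $\overline{X_i}$; $\widetilde X_f:=\bigcap_{n\geqslant0}f^{-n}(X\setminus\Delta_f)$. Atoms of a map $h$ with pieces $Z_i$ on an interval $Z$: $F_i(A):=\overline{h(A\cap Z_i)}$, $A_{i_1\dots i_n}:=F_{i_n}\circ\dots\circ F_{i_1}(Z)$ is an atom of generation $n$ if non-empty (so atoms of generation 1 are the sets $\overline{h(Z_i)}$). $\mathcal{A}_n$ is the set of atoms of generation $n$ of $f$, $\mathcal{A}_n(x):=\{A\in\mathcal{A}_n:\exists t\in\mathbb{N},f^{t+n}(x)\in A\}$; attractor $\Lambda_f:=\bigcap_{n\geqslant1}\bigcup_{A\in\mathcal{A}_n}A$. $\Delta_{lr}(x)$ is the set of $c_i\in\Delta_f$ such that for every $n\geqslant1$ there is $A\in\mathcal{A}_n(x)$ with $c_i\in A$, $f^{t+n}(x)\in A\cap X_i$ and $f^{t'+n}(x)\in A\cap X_{i+1}$ for some $t,t'\in\mathbb{N}$. P1: $f$ is discontinuous at every point of $\Delta_f$ and $f|_{X_i}$ is affine with slope $\lambda\in(0,1)$ for all $i$. P2 (separation): each $f_i$ injective and $f_i(\overline{X_i})\cap f_j(\overline{X_j})=\emptyset$ for $i\neq j$. P3: $\Lambda_f$ is a Cantor set. P4: $\bigcup_{i=1}^{N-1}\{f_i(c_i),f_{i+1}(c_i)\}\subset\widetilde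 X_f$. P5: for some $i$, $\{f^n(f_i(c_i))\}_n$ or $\{f^n(f_{i+1}(c_i))\}_n$ is dense in $\Lambda_f$. P6: $c_i\in\Delta_{lr}(x)$ for all $x\in\widetilde X_f$ and $i\in\{1,\dots,N-1\}$. A well-cutting orbit of $f$ is an orbit $\{\xi_r\}_{r\in\mathbb{N}}$, $\xi_r=f^r(\xi_0)$, with $\xi_0\in\Lambda_f\cap\widetilde X_f$, containing no point of: (1) the boundary points of the gaps of the Cantor set $\Lambda_f$; (2) the forward orbits of $c_0$ and $c_N$; (3) the forward orbits of $f_i(c_i)$ and $f_{i+1}(c_i)$, $i\in\{1,\dots,N-1\}$. *)

(* Defs.v *)
From Stdlib Require Import Reals Lra List.
From Coquelicot Require Import Coquelicot.
Open Scope R_scope.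

Definition rclosure (A : R -> Prop) : R -> Prop :=
  fun x => forall eps, 0 < eps -> exists a, A a /\ Rabs (x - a) < eps.

Definition piece (c : nat -> R) (K i : nat) (x : R) : Prop :=
  (if Nat.eqb i 1 then c 0%nat <= x else c (i - 1)%nat < x) /\
  (if Nat.eqb i K then x <= c K else x < c i).

Definition Xint (c : nat -> R) (K : nat) (x : R) : Prop := c 0%nat <= x <= c K.

Definition Fmap (h : R -> R) (Zp : nat -> R -> Prop) (i : nat) (A : R -> Prop)
  : R -> Prop :=
  rclosure (fun y => exists x, A x /\ Zp i x /\ h x = y).

Definition atom_of_word (h : R -> R) (Zp : nat -> R -> Prop) (Z : R -> Prop)
  (w : list nat) : R -> Prop :=
  List.fold_left (fun (A : R -> Prop) (i : nat) => Fmap h Zp i A) w Z.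

Definition valid_word (K n : nat) (w : list nat) : Prop :=
  List.length w = n /\ List.Forall (fun i => (1 <= i <= K)%nat) w.

Definition is_atom (h : R -> R) (Zp : nat -> R -> Prop) (Z : R -> Prop) (K n : nat)
  (A : R -> Prop) : Prop :=
  exists w, valid_word K n w /\ (forall x, A x <-> atom_of_word h Zp Z w x)
            /\ exists x, A x.

Definition attractor (h : R -> R) (Zp : nat -> R -> Prop) (Z : R -> Prop) (K : nat)
  (x : R) : Prop :=
  forall n, (1 <= n)%nat -> exists A, is_atom h Zp Z K n A /\ A x.

Definition DeltaF (c : nat -> R) (N : nat) (x : R) : Prop :=
  exists i, (1 <= i <= N - 1)%nat /\ x = c i.

Definition Xtilde (f : R -> R) (c : nat -> R) (N : nat) (x : R) : Prop :=
  forall n, Xint c N (Nat.iter n f x) /\ ~ DeltaF c N (Nat.iter n f x).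

Definition in_An_x (f : R -> R) (c : nat -> R) (N n : nat) (x : R) (A : R -> Prop)
  : Prop :=
  is_atom f (piece c N) (Xint c N) N n A /\
  exists t, A (Nat.iter (t + n) f x).

Definition c_in_Delta_lr (f : R -> R) (c : nat -> R) (N : nat) (x : R) (i : nat)
  : Prop :=
  (1 <= i <= N - 1)%nat /\
  forall n, (1 <= n)%nat ->
    exists A, in_An_x f c N n x A /\ A (c i) /\
      (exists t, A (Nat.iter (t + n) f x) /\ piece c N i (Nat.iter (t + n) f x)) /\
      (exists t', A (Nat.iter (t' + n) f x) /\
                  piece c N (i + 1) (Nat.iter (t' + n) f x)).

Definition cantor_set (S : R -> Prop) : Prop :=
  (exists x, S x) /\
  (forall x, rclosure S x -> S x) /\
  (exists M, forall x, S x -> Rabs x <= M) /\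
  (forall x, S x -> forall eps, 0 < eps -> exists y, S y /\ y <> x /\ Rabs (y - x) < eps) /\
  (forall a b, a < b -> exists z, a < z < b /\ ~ S z).

Definition gap_endpoint (S : R -> Prop) (p : R) : Prop :=
  S p /\ exists q, S q /\ q <> p /\
    forall z, Rmin p q < z < Rmax p q -> ~ S z.

(* continuous extension of f|X_i, given f = lam x + b i on X_i (propP1) *)
Definition fext (lam : R) (b : nat -> R) (i : nat) (x : R) : R := lam * x + b i.

Definition Lambda_f (f : R -> R) (c : nat -> R) (N : nat) : R -> Prop :=
  attractor f (piece c N) (Xint c N) N.

Definition propP1 (f : R -> R) (lam : R) (b : nat -> R) (c : nat -> R) (N : nat) : Prop :=
  (forall i, (1 <= i <= N - 1)%nat ->
     ~ (forall eps, 0 < eps -> exists delta, 0 < delta /\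
          forall y, Xint c N y -> Rabs (y - c i) < delta ->
            Rabs (f y - f (c i)) < eps)) /\
  0 < lam < 1 /\
  (forall i x, (1 <= i <= N)%nat -> piece c N i x -> f x = lam * x + b i).

Definition propP2 (lam : R) (b : nat -> R) (c : nat -> R) (N : nat) : Prop :=
  (forall i x y, (1 <= i <= N)%nat ->
     c (i - 1)%nat <= x <= c i -> c (i - 1)%nat <= y <= c i ->
     fext lam b i x = fext lam b i y -> x = y) /\
  (forall i j x y, (1 <= i <= N)%nat -> (1 <= j <= N)%nat -> i <> j ->
     c (i - 1)%nat <= x <= c i -> c (j - 1)%nat <= y <= c j ->
     fext lam b i x <> fext lam b j y).

Definition propP3 (f : R -> R) (c : nat -> R) (N : nat) : Prop :=
  cantor_set (Lambda_f f c N).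

Definition propP4 (f : R -> R) (lam : R) (b : nat -> R) (c : nat -> R) (N : nat) : Prop :=
  forall i, (1 <= i <= N - 1)%nat ->
    Xtilde f c N (fext lam b i (c i)) /\ Xtilde f c N (fext lam b (i + 1) (c i)).

Definition orbit_dense_in (f : R -> R) (y : R) (S : R -> Prop) : Prop :=
  forall x, S x -> rclosure (fun z => exists n, z = Nat.iter n f y) x.

Definition propP5 (f : R -> R) (lam : R) (b : nat -> R) (c : nat -> R) (N : nat) : Prop :=
  exists i, (1 <= i <= N - 1)%nat /\
    (orbit_dense_in f (fext lam b i (c i)) (Lambda_f f c N) \/
     orbit_dense_in f (fext lam b (i + 1) (c i)) (Lambda_f f c N)).

Definition propP6 (f : R -> R) (c : nat -> R) (N : nat) : Prop :=
  forall x i, Xtilde f c N x -> (1 <= i <= N - 1)%nat -> c_in_Delta_lr f c N x i.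

Definition in_forward_orbit (f : R -> R) (y z : R) : Prop :=
  exists n, z = Nat.iter n f y.

Definition well_cutting (f : R -> R) (lam : R) (b : nat -> R) (c : nat -> R) (N : nat)
  (xi : nat -> R) : Prop :=
  (forall r, xi r = Nat.iter r f (xi 0%nat)) /\
  Lambda_f f c N (xi 0%nat) /\ Xtilde f c N (xi 0%nat) /\
  forall r,
    ~ gap_endpoint (Lambda_f f c N) (xi r) /\
    ~ in_forward_orbit f (c 0%nat) (xi r) /\
    ~ in_forward_orbit f (c N) (xi r) /\
    (forall i, (1 <= i <= N - 1)%nat ->
       ~ in_forward_orbit f (fext lam b i (c i)) (xi r) /\
       ~ in_forward_orbit f (fext lam b (i + 1) (c i)) (xi r)).

Definition phi (lam : R) (xi : nat -> R) (x : R) : R :=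
  x + Series (fun n => if Nat.ltb 0 n then
                         (if Rlt_dec (xi n) x then lam ^ n else 0) else 0).

Definition Gr (lam : R) (xi : nat -> R) (r : nat) (y : R) : Prop :=
  phi lam xi (xi r) < y <= phi lam xi (xi r) + lam ^ r.

Definition Delta_g (lam : R) (xi : nat -> R) (c : nat -> R) (N : nat) (y : R) : Prop :=
  exists x, (DeltaF c N x \/ x = xi 0%nat) /\ y = phi lam xi x.

Definition gen1_atoms_at_most_one (h : R -> R) (Zp : nat -> R -> Prop) (Z : R -> Prop)
  (K : nat) (D : R -> Prop) : Prop :=
  forall A, is_atom h Zp Z K 1 A ->
    forall y1 y2, A y1 -> A y2 -> D y1 -> D y2 -> y1 = y2.

(* Main.v *)
Require Import Defs.
From Stdlib Require Import Reals Lra Lia List ClassicalEpsilon Classical ZArith.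
From Stdlib Require Arith.Cantor.
From Coquelicot Require Import Coquelicot.
Open Scope R_scope.

Definition Rltb (a b : R) : bool := if Rlt_dec a b then true else false.
Definition Rleb (a b : R) : bool := if Rle_dec a b then true else false.

Lemma Rltb_true a b : Rltb a b = true <-> a < b.
Proof. unfold Rltb; destruct (Rlt_dec a b); split; intros; auto; discriminate. Qed.
Lemma Rleb_true a b : Rleb a b = true <-> a <= b.
Proof. unfold Rleb; destruct (Rle_dec a b); split; intros; auto; try discriminate; lra. Qed.

Lemma pow_le_one x k : 0 <= x <= 1 -> x ^ k <= 1.
Proof. intros H; induction k; simpl; [lra|]. rewrite <- (Rmult_1_r 1). apply Rmult_le_compat; try lra. apply pow_le; lra. Qed.

Definition tm (lam : R) (P : nat -> bool) (n : nat) : R := if P n then lam ^ n else 0.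
Definition Ssum (lam : R) (P : nat -> bool) : R := Series (tm lam P).

Lemma Series_zero : Series (fun _ => 0) = 0.
Proof.
  rewrite <- (Series_ext (fun n => 0 * (fun _ => 0) n)); [|intros; simpl; ring].
  rewrite Series_scal_l; ring.
Qed.

Lemma tm_bounds lam P n : 0 < lam -> 0 <= tm lam P n <= lam ^ n.
Proof. intros; unfold tm; destruct (P n); split; try lra; try apply pow_le; lra. Qed.

Lemma ex_tm lam P : 0 < lam < 1 -> ex_series (tm lam P).
Proof.
  intros H. apply (@ex_series_le R_AbsRing R_CompleteNormedModule _ (fun n => lam ^ n)).
  - intros n. change (norm (tm lam P n)) with (Rabs (tm lam P n)).
    pose proof (tm_bounds lam P n (proj1 H)). rewrite Rabs_right; lra.
  - apply ex_series_geom. rewrite Rabs_right; lra.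
Qed.

Lemma Ssum_nonneg lam P : 0 < lam < 1 -> 0 <= Ssum lam P.
Proof.
  intros H. rewrite <- Series_zero. unfold Ssum. apply Series_le; [|apply ex_tm; auto].
  intros n; pose proof (tm_bounds lam P n (proj1 H)); lra.
Qed.

Lemma Ssum_mono lam P Q : 0 < lam < 1 -> (forall n, P n = true -> Q n = true) ->
  Ssum lam P <= Ssum lam Q.
Proof.
  intros H HPQ. unfold Ssum. apply Series_le; [|apply ex_tm; auto].
  intros n. unfold tm. specialize (HPQ n). destruct (P n).
  - rewrite HPQ; auto. split; [apply pow_le|]; lra.
  - destruct (Q n); split; try lra. apply pow_le; lra.
Qed.

Lemma Ssum_union lam P Q1 Q2 : 0 < lam < 1 ->
  (forall n, P n = true -> Q1 n = true \/ Q2 n = true) ->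
  Ssum lam P <= Ssum lam Q1 + Ssum lam Q2.
Proof.
  intros H HPQ. unfold Ssum. rewrite <- Series_plus; try apply ex_tm; auto.
  apply Series_le.
  - intros n. pose proof (tm_bounds lam P n (proj1 H)).
    pose proof (tm_bounds lam Q1 n (proj1 H)). pose proof (tm_bounds lam Q2 n (proj1 H)).
    split; [lra|]. unfold tm in *. specialize (HPQ n). destruct (P n); [|lra].
    destruct (HPQ eq_refl) as [E|E]; rewrite E in *; lra.
  - apply (@ex_series_plus R_AbsRing R_NormedModule); apply ex_tm; auto.
Qed.

Lemma Ssum_single_eq lam r : 0 < lam < 1 -> Ssum lam (fun n => Nat.eqb n r) = lam ^ r.
Proof.
  intros H. unfold Ssum.
  rewrite (Series_incr_n_aux _ r).
  2:{ intros k Hk. unfold tm. destruct (Nat.eqb_spec k r); [lia|auto]. }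
  rewrite Series_incr_1.
  2:{ apply (ex_series_incr_n (tm lam (fun n => Nat.eqb n r)) r). apply ex_tm; auto. }
  rewrite (Series_ext _ (fun _ => 0)).
  2:{ intros k. unfold tm. destruct (Nat.eqb_spec (r + S k) r); [lia|auto]. }
  rewrite Series_zero. unfold tm. rewrite Nat.add_0_r, Nat.eqb_refl. ring.
Qed.

Lemma Ssum_single lam P r : 0 < lam < 1 -> P r = true -> lam ^ r <= Ssum lam P.
Proof.
  intros H Hr. rewrite <- (Ssum_single_eq lam r H). apply Ssum_mono; auto.
  intros n E. apply Nat.eqb_eq in E. subst; auto.
Qed.

Lemma Ssum_tail lam : 0 < lam < 1 -> forall eps, 0 < eps ->
  exists M, Ssum lam (fun n => Nat.ltb M n) < eps.
Proof.
  intros H eps Heps. set (mu := sqrt lam).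
  assert (Hmu0 : 0 < mu) by (apply sqrt_lt_R0; lra).
  assert (Hmu1 : mu < 1).
  { unfold mu. rewrite <- sqrt_1. apply sqrt_lt_1; lra. }
  assert (Hmu2 : mu * mu = lam) by (apply sqrt_sqrt; lra).
  destruct (pow_lt_1_zero mu ltac:(rewrite Rabs_right; lra) (eps * (1 - mu))
    ltac:(apply Rmult_lt_0_compat; lra)) as [M HM].
  exists M. specialize (HM M (Nat.le_refl M)). rewrite Rabs_right in HM by (apply Rle_ge, pow_le; lra).
  apply Rle_lt_trans with (Series (fun n => mu ^ M * mu ^ n)).
  - unfold Ssum. apply Series_le.
    + intros n. pose proof (tm_bounds lam (fun n => Nat.ltb M n) n (proj1 H)). split; [lra|].
      unfold tm. destruct (Nat.ltb_spec M n).
      * rewrite <- Hmu2, Rpow_mult_distr. apply Rmult_le_compat_r; [apply pow_le; lra|].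
        replace n with (M + (n - M))%nat by lia. rewrite pow_add.
        rewrite <- (Rmult_1_r (mu ^ M)) at 2. apply Rmult_le_compat_l; [apply pow_le; lra|].
        apply pow_le_one; lra.
      * apply Rmult_le_pos; apply pow_le; lra.
    + exact (@ex_series_scal_l R_AbsRing R_NormedModule (mu ^ M) (fun n => mu ^ n)
        (ex_series_geom mu ltac:(rewrite Rabs_right; lra))).
  - rewrite Series_scal_l, Series_geom by (rewrite Rabs_right; lra).
    apply (Rmult_lt_reg_r (1 - mu)); [lra|]. rewrite Rmult_assoc, Rinv_l by lra. lra.
Qed.

Local Open Scope bool_scope.

Lemma phi_S lam xi x : phi lam xi x = x + Ssum lam (fun n => Nat.ltb 0 n && Rltb (xi n) x).
Proof.
  unfold phi, Ssum. f_equal. apply Series_ext. intros n. unfold tm, Rltb.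
  destruct (Nat.ltb 0 n); simpl; auto. destruct (Rlt_dec (xi n) x); auto.
Qed.

Definition between (xi : nat -> R) (a b : R) (n : nat) : bool :=
  Nat.ltb 0 n && Rleb a (xi n) && Rltb (xi n) b.

Lemma phi_diff lam xi a b : 0 < lam < 1 -> a <= b ->
  phi lam xi b - phi lam xi a = b - a + Ssum lam (between xi a b).
Proof.
  intros H Hab. rewrite !phi_S. unfold Ssum.
  assert (E : Series (tm lam (fun n => Nat.ltb 0 n && Rltb (xi n) b)) -
              Series (tm lam (fun n => Nat.ltb 0 n && Rltb (xi n) a)) =
              Series (tm lam (between xi a b))).
  { rewrite <- Series_minus by (apply ex_tm; auto). apply Series_ext. intros n.
    unfold tm, between, Rltb, Rleb. destruct (Nat.ltb 0 n); simpl; [|ring].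
    destruct (Rlt_dec (xi n) b); destruct (Rlt_dec (xi n) a); destruct (Rle_dec a (xi n));
      simpl; try ring; lra. }
  lra.
Qed.

Lemma phi_ge lam xi a b : 0 < lam < 1 -> a <= b -> b - a <= phi lam xi b - phi lam xi a.
Proof. intros H Hab. rewrite phi_diff by auto. pose proof (Ssum_nonneg lam (between xi a b) H). lra. Qed.

Lemma phi_jump lam xi a b r : 0 < lam < 1 -> (1 <= r)%nat -> a <= xi r < b ->
  b - a + lam ^ r <= phi lam xi b - phi lam xi a.
Proof.
  intros H Hr Hx. rewrite phi_diff by lra.
  assert (lam ^ r <= Ssum lam (between xi a b)); [|lra].
  apply Ssum_single; auto. unfold between.
  apply andb_true_intro; split; [apply andb_true_intro; split|].
  - apply Nat.ltb_lt; lia.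
  - apply Rleb_true; lra.
  - apply Rltb_true; lra.
Qed.

Lemma phi_lt lam xi a b : 0 < lam < 1 -> a < b -> phi lam xi a < phi lam xi b.
Proof. intros H Hab. pose proof (phi_ge lam xi a b H ltac:(lra)). lra. Qed.

Lemma phi_le_inv lam xi a b : 0 < lam < 1 -> phi lam xi a <= phi lam xi b -> a <= b.
Proof. intros H Hp. destruct (Rle_dec a b); auto. pose proof (phi_lt lam xi b a H ltac:(lra)). lra. Qed.

Lemma phi_lt_inv lam xi a b : 0 < lam < 1 -> phi lam xi a < phi lam xi b -> a < b.
Proof. intros H Hp. destruct (Rlt_dec a b); auto. destruct (Req_dec a b). subst; lra.
  pose proof (phi_lt lam xi b a H ltac:(lra)). lra. Qed.

Lemma phi_inj lam xi a b : 0 < lam < 1 -> phi lam xi a = phi lam xi b -> a = b.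
Proof. intros H Hp. destruct (Rtotal_order a b) as [h|[h|h]]; auto;
  pose proof (phi_lt lam xi _ _ H h); lra. Qed.

Lemma phi_dist lam xi a b : 0 < lam < 1 -> Rabs (a - b) <= Rabs (phi lam xi a - phi lam xi b).
Proof.
  intros H. destruct (Rle_dec a b).
  - pose proof (phi_ge lam xi a b H r). rewrite !Rabs_left1; lra.
  - pose proof (phi_ge lam xi b a H ltac:(lra)). rewrite !Rabs_right; lra.
Qed.

Local Open Scope bool_scope.

Lemma fin_min (P : nat -> Prop) (g : nat -> R) M :
  (forall n, (n <= M)%nat -> P n -> 0 < g n) ->
  exists eta, 0 < eta /\ forall n, (n <= M)%nat -> P n -> eta <= g n.
Proof.
  induction M as [|M IH]; intros H.
  - destruct (classic (P 0%nat)) as [h|h].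
    + exists (g 0%nat). split; [apply H; auto|]. intros n Hn Pn. assert (n = 0%nat) by lia; subst; lra.
    + exists 1. split; [lra|]. intros n Hn Pn. assert (n = 0%nat) by lia; subst; contradiction.
  - destruct IH as [e [He1 He2]]. { intros n Hn Pn; apply H; auto. }
    destruct (classic (P (S M))) as [h|h].
    + exists (Rmin e (g (S M))). split. { apply Rmin_pos; auto. }
      intros n Hn Pn. destruct (Nat.eq_dec n (S M)). subst; apply Rmin_r.
      eapply Rle_trans; [apply Rmin_l|]. apply He2; auto; lia.
    + exists e. split; auto. intros n Hn Pn. destruct (Nat.eq_dec n (S M)). subst; contradiction.
      apply He2; auto; lia.
Qed.

Definition eqset (xi : nat -> R) (s : R) (n : nat) : bool :=
  Nat.ltb 0 n && Rleb s (xi n) && Rleb (xi n) s.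

Lemma Ssum_false lam : Ssum lam (fun _ => false) = 0.
Proof. unfold Ssum, tm. apply Series_zero. Qed.

Lemma near_small lam xi s δ : 0 < lam < 1 -> 0 < δ ->
  exists eta, 0 < eta /\
   (forall x, s - eta < x <= s -> Ssum lam (between xi x s) <= δ) /\
   (forall x, s <= x < s + eta -> Ssum lam (between xi s x) <= Ssum lam (eqset xi s) + δ).
Proof.
  intros H Hd. destruct (Ssum_tail lam H δ Hd) as [M HM].
  destruct (fin_min (fun n => xi n <> s) (fun n => Rabs (xi n - s)) M) as [eta [He1 He2]].
  { intros n _ h. apply Rabs_pos_lt. lra. }
  exists eta. split; auto. split.
  - intros x Hx. apply Rle_trans with (Ssum lam (fun n => Nat.ltb M n)); [|lra].
    apply Ssum_mono; auto. intros n Hn. unfold between in Hn.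
    apply andb_prop in Hn as [Hn Hn3]. apply andb_prop in Hn as [Hn1 Hn2].
    apply Rleb_true in Hn2. apply Rltb_true in Hn3.
    apply Nat.ltb_lt. destruct (Compare_dec.le_lt_dec n M) as [l|l]; auto.
    specialize (He2 n l ltac:(lra)). rewrite Rabs_left in He2 by lra. lra.
  - intros x Hx. apply Rle_trans with (Ssum lam (eqset xi s) + Ssum lam (fun n => Nat.ltb M n)); [|lra].
    apply Ssum_union; auto. intros n Hn. unfold between in Hn.
    apply andb_prop in Hn as [Hn Hn3]. apply andb_prop in Hn as [Hn1 Hn2].
    apply Rleb_true in Hn2. apply Rltb_true in Hn3.
    destruct (Req_dec (xi n) s) as [e|e].
    + left. unfold eqset. rewrite Hn1. simpl. apply andb_true_intro; split; apply Rleb_true; lra.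
    + right. apply Nat.ltb_lt. destruct (Compare_dec.le_lt_dec n M) as [l|l]; auto.
      specialize (He2 n l e). rewrite Rabs_right in He2 by lra. lra.
Qed.

Lemma eqset_bound lam xi s : 0 < lam < 1 ->
  (forall n m, (1 <= n)%nat -> (1 <= m)%nat -> xi n = xi m -> n = m) ->
  (Ssum lam (eqset xi s) = 0 /\ (forall r, (1 <= r)%nat -> xi r <> s)) \/
  (exists r, (1 <= r)%nat /\ xi r = s /\ Ssum lam (eqset xi s) <= lam ^ r).
Proof.
  intros H Hd. destruct (classic (exists r, (1 <= r)%nat /\ xi r = s)) as [[r [Hr Hx]]|h].
  - right. exists r. split; auto. split; auto. rewrite <- (Ssum_single_eq lam r H).
    apply Ssum_mono; auto. intros n Hn. unfold eqset in Hn.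
    apply andb_prop in Hn as [Hn Hn3]. apply andb_prop in Hn as [Hn1 Hn2].
    apply Rleb_true in Hn2. apply Rleb_true in Hn3. apply Nat.ltb_lt in Hn1.
    apply Nat.eqb_eq. apply Hd; auto; lra.
  - left. split.
    + apply Rle_antisym; [|apply Ssum_nonneg; auto]. rewrite <- (Ssum_false lam).
      apply Ssum_mono; auto. intros n Hn. exfalso. apply h. exists n. unfold eqset in Hn.
      apply andb_prop in Hn as [Hn Hn3]. apply andb_prop in Hn as [Hn1 Hn2].
      apply Rleb_true in Hn2. apply Rleb_true in Hn3. apply Nat.ltb_lt in Hn1. split; [lia|lra].
    + intros r Hr E. apply h; eauto.
Qed.

Lemma cover lam xi lo hi y : 0 < lam < 1 -> lo <= hi ->
  (forall n m, (1 <= n)%nat -> (1 <= m)%nat -> xi n = xi m -> n = m) ->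
  phi lam xi lo <= y <= phi lam xi hi ->
  (exists z, lo <= z <= hi /\ y = phi lam xi z) \/ (exists r, (1 <= r)%nat /\ Gr lam xi r y).
Proof.
  intros H Hlh Hd Hy.
  set (E := fun x => lo <= x <= hi /\ phi lam xi x <= y).
  destruct (completeness E) as [s [Hs1 Hs2]].
  { exists hi. intros x Hx. apply Hx. }
  { exists lo. split; [lra|apply Hy]. }
  assert (Hlo : lo <= s) by (apply Hs1; split; [lra|apply Hy]).
  assert (Hhi : s <= hi) by (apply Hs2; intros x Hx; apply Hx).
  assert (Hsy : phi lam xi s <= y).
  { destruct (Rle_dec (phi lam xi s) y) as [h|h]; auto. exfalso.
    set (δ := phi lam xi s - y).
    destruct (near_small lam xi s (δ/2) H ltac:(unfold δ; lra)) as [eta [He [HL _]]].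
    destruct (classic (exists x, E x /\ s - Rmin eta (δ/2) < x)) as [[x [Ex Hx]]|h2].
    - assert (x <= s) by (apply Hs1; auto).
      pose proof (Rmin_l eta (δ/2)). pose proof (Rmin_r eta (δ/2)).
      specialize (HL x ltac:(lra)). pose proof (phi_diff lam xi x s H ltac:(lra)).
      destruct Ex as [_ Ex]. unfold δ in *. lra.
    - assert (s <= s - Rmin eta (δ/2)).
      { apply Hs2. intros x Ex. destruct (Rle_dec x (s - Rmin eta (δ/2))); auto.
        exfalso; apply h2; exists x; split; auto; lra. }
      assert (0 < Rmin eta (δ/2)) by (apply Rmin_pos; unfold δ in *; lra). lra. }
  destruct (Req_dec (phi lam xi s) y) as [e|ne].
  { left. exists s. split; [lra|auto]. }
  assert (Hsy2 : phi lam xi s < y) by lra.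
  assert (Hshi : s < hi).
  { destruct (Req_dec s hi); [subst; lra|lra]. }
  assert (Hbig : forall x, s < x <= hi -> y < phi lam xi x).
  { intros x Hx. destruct (Rlt_dec y (phi lam xi x)) as [h|h]; auto.
    assert (x <= s) by (apply Hs1; split; [lra|lra]). lra. }
  destruct (eqset_bound lam xi s H Hd) as [[Hz Hnr]|[r [Hr [Hxr Hsr]]]].
  - exfalso. set (δ := y - phi lam xi s).
    destruct (near_small lam xi s (δ/2) H ltac:(unfold δ; lra)) as [eta [He [_ HR]]].
    assert (0 < Rmin eta (hi - s)) by (apply Rmin_pos; lra).
    assert (0 < Rmin (Rmin eta (hi - s)) (δ/2)) by (apply Rmin_pos; unfold δ in *; lra).
    pose proof (Rmin_l eta (hi - s)). pose proof (Rmin_r eta (hi - s)).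
    pose proof (Rmin_l (Rmin eta (hi - s)) (δ/2)). pose proof (Rmin_r (Rmin eta (hi - s)) (δ/2)).
    set (x := s + Rmin (Rmin eta (hi - s)) (δ/2) / 2).
    specialize (HR x ltac:(unfold x; lra)). rewrite Hz in HR.
    pose proof (phi_diff lam xi s x H ltac:(unfold x; lra)).
    specialize (Hbig x ltac:(unfold x; lra)). unfold x in *; unfold δ in *; lra.
  - right. exists r. split; auto. unfold Gr. rewrite Hxr. split; auto.
    destruct (Rle_dec y (phi lam xi s + lam ^ r)) as [h|h]; auto. exfalso.
    set (δ := y - phi lam xi s - lam ^ r).
    destruct (near_small lam xi s (δ/2) H ltac:(unfold δ; lra)) as [eta [He [_ HR]]].
    assert (0 < Rmin eta (hi - s)) by (apply Rmin_pos; lra).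
    assert (0 < Rmin (Rmin eta (hi - s)) (δ/2)) by (apply Rmin_pos; unfold δ in *; lra).
    pose proof (Rmin_l eta (hi - s)). pose proof (Rmin_r eta (hi - s)).
    pose proof (Rmin_l (Rmin eta (hi - s)) (δ/2)). pose proof (Rmin_r (Rmin eta (hi - s)) (δ/2)).
    set (x := s + Rmin (Rmin eta (hi - s)) (δ/2) / 2).
    specialize (HR x ltac:(unfold x; lra)).
    pose proof (phi_diff lam xi s x H ltac:(unfold x; lra)).
    specialize (Hbig x ltac:(unfold x; lra)). unfold x in *; unfold δ in *; lra.
Qed.

Lemma avoid_step (K : R -> Prop) (p r z : R) :
  (forall x, K x -> forall eps, 0 < eps -> exists y, K y /\ y <> x /\ Rabs (y - x) < eps) ->
  K p -> 0 < r ->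
  exists p' r', K p' /\ 0 < r' /\ r' <= r / 2 /\ Rabs (p' - p) + r' <= r /\ r' < Rabs (p' - z).
Proof.
  intros Hperf Kp Hr.
  destruct (Req_dec p z) as [e|ne].
  - destruct (Hperf p Kp (r/2) ltac:(lra)) as [q [Kq [Hqp Hd]]].
    assert (0 < Rabs (q - p)) by (apply Rabs_pos_lt; lra).
    exists q, (Rmin (r/4) (Rabs (q - p) / 2)). subst z.
    pose proof (Rmin_l (r/4) (Rabs (q - p) / 2)). pose proof (Rmin_r (r/4) (Rabs (q - p) / 2)).
    repeat split; auto; try lra. apply Rmin_pos; lra.
  - assert (0 < Rabs (p - z)) by (apply Rabs_pos_lt; lra).
    exists p, (Rmin (r/2) (Rabs (p - z) / 2)).
    pose proof (Rmin_l (r/2) (Rabs (p - z) / 2)). pose proof (Rmin_r (r/2) (Rabs (p - z) / 2)).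
    rewrite Rminus_diag, Rabs_R0.
    repeat split; auto; try lra. apply Rmin_pos; lra.
Qed.

Definition stepP (K : R -> Prop) (e : nat -> R) (n : nat) (pr q : R * R) : Prop :=
  K (fst pr) -> 0 < snd pr ->
  K (fst q) /\ 0 < snd q /\ snd q <= snd pr / 2 /\
  Rabs (fst q - fst pr) + snd q <= snd pr /\ snd q < Rabs (fst q - e n).

Fixpoint nest (K : R -> Prop) (e : nat -> R) (p0 : R) (n : nat) : R * R :=
  match n with
  | O => (p0, 1)
  | S m => epsilon (inhabits (0, 0)) (stepP K e m (nest K e p0 m))
  end.

Lemma avoid_countable (K : R -> Prop) (e : nat -> R) :
  (exists x, K x) -> (forall x, rclosure K x -> K x) ->
  (forall x, K x -> forall eps, 0 < eps -> exists y, K y /\ y <> x /\ Rabs (y - x) < eps) ->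
  exists x, K x /\ forall n, x <> e n.
Proof.
  intros [p0 Kp0] Hcl Hperf.
  set (sq := nest K e p0).
  assert (Hstep : forall n, stepP K e n (sq n) (sq (S n))).
  { intros n. change (sq (S n)) with (epsilon (inhabits (0, 0)) (stepP K e n (sq n))). apply epsilon_spec.
    destruct (classic (K (fst (sq n)) /\ 0 < snd (sq n))) as [[h1 h2]|h].
    - destruct (avoid_step K (fst (sq n)) (snd (sq n)) (e n) Hperf h1 h2) as [p' [r' Hp]].
      exists (p', r'). intros _ _. simpl. exact Hp.
    - exists (0, 0). intros h1 h2. exfalso; auto. }
  assert (Hinv : forall n, K (fst (sq n)) /\ 0 < snd (sq n)).
  { induction n. simpl. split; auto; lra.
    destruct IHn as [h1 h2]. destruct (Hstep n h1 h2) as [? [? _]]. auto. }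
  set (p := fun n => fst (sq n)). set (r := fun n => snd (sq n)).
  assert (Hs : forall n, K (p (S n)) /\ 0 < r (S n) /\ r (S n) <= r n / 2 /\
     Rabs (p (S n) - p n) + r (S n) <= r n /\ r (S n) < Rabs (p (S n) - e n)).
  { intros n. destruct (Hinv n). apply Hstep; auto. }
  assert (Hr0 : forall n, 0 < r n) by (intros n; apply Hinv).
  assert (Hrb : forall n, r n <= (1/2) ^ n).
  { induction n. unfold r; simpl; lra. simpl. destruct (Hs n) as [_ [_ [h _]]]. lra. }
  assert (Hnest : forall k n, Rabs (p (k + n)%nat - p n) + r (k + n)%nat <= r n).
  { induction k; intros n. simpl. rewrite Rminus_diag, Rabs_R0. lra.
    simpl. destruct (Hs (k + n)%nat) as [_ [_ [_ [h _]]]]. specialize (IHk n).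
    pose proof (Rabs_triang (p (S (k + n)) - p (k + n)%nat) (p (k + n)%nat - p n)).
    replace (p (S (k + n)) - p (k + n)%nat + (p (k + n)%nat - p n)) with (p (S (k+n)) - p n) in H by ring.
    lra. }
  assert (Hsmall : forall eps, 0 < eps -> exists N, r N < eps).
  { intros eps He. destruct (pow_lt_1_zero (1/2) ltac:(rewrite Rabs_right; lra) eps He) as [N HN].
    exists N. specialize (HN N (Nat.le_refl N)). rewrite Rabs_right in HN by (apply Rle_ge, pow_le; lra).
    specialize (Hrb N). lra. }
  assert (Hcau : Cauchy_crit p).
  { intros eps He. destruct (Hsmall (eps/2) ltac:(lra)) as [N HN]. exists N. intros n m Hn Hm.
    unfold Rdist. pose proof (Hnest (n - N)%nat N). pose proof (Hnest (m - N)%nat N).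
    replace (n - N + N)%nat with n in H by lia. replace (m - N + N)%nat with m in H0 by lia.
    pose proof (Hr0 n). pose proof (Hr0 m).
    pose proof (Rabs_triang (p n - p N) (p N - p m)). rewrite Rabs_minus_sym with (x := p N) in H3.
    replace (p n - p N + (p N - p m)) with (p n - p m) in H3 by ring. lra. }
  destruct (Rcomplete.R_complete p Hcau) as [x Hx].
  assert (Hclose : forall n, Rabs (x - p n) <= r n).
  { intros n. destruct (Rle_dec (Rabs (x - p n)) (r n)) as [h|h]; auto. exfalso.
    destruct (Hx (Rabs (x - p n) - r n) ltac:(lra)) as [M HM].
    specialize (HM (M + n)%nat ltac:(lia)). unfold Rdist in HM.
    pose proof (Hnest M n). pose proof (Hr0 (M + n)%nat).
    pose proof (Rabs_triang (x - p (M + n)%nat) (p (M + n)%nat - p n)).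
    rewrite Rabs_minus_sym with (x := x) in H1.
    replace (x - p (M + n)%nat + (p (M + n)%nat - p n)) with (x - p n) in H1 by ring. lra. }
  exists x. split.
  - apply Hcl. intros eps He. destruct (Hsmall eps He) as [N HN]. exists (p N). split.
    apply Hinv. specialize (Hclose N). lra.
  - intros n E. destruct (Hs n) as [_ [_ [_ [_ h]]]]. specialize (Hclose (S n)).
    rewrite E in Hclose. rewrite Rabs_minus_sym in Hclose. lra.
Qed.

Definition qn (k : nat) : R :=
  let (a, bm) := Cantor.of_nat k in let (b, m) := Cantor.of_nat bm in
  (INR a - INR b) / INR (S m).

Lemma IZR_split z : IZR z = INR (Z.to_nat z) - INR (Z.to_nat (- z)).
Proof.
  rewrite !INR_IZR_INZ. destruct (Z_le_gt_dec 0 z).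
  - rewrite Z2Nat.id by lia. replace (Z.to_nat (- z)) with 0%nat by lia. simpl. ring.
  - replace (Z.to_nat z) with 0%nat by lia. rewrite Z2Nat.id by lia. rewrite opp_IZR. simpl. ring.
Qed.

Lemma qn_dense p q : p < q -> exists k, p < qn k < q.
Proof.
  intros Hpq. destruct (archimed_cor1 (q - p) ltac:(lra)) as [n [Hn Hn0]].
  destruct n as [|m]; [lia|].
  assert (Hm : 0 < INR (S m)) by (apply lt_0_INR; lia).
  set (z := up (p * INR (S m))). destruct (archimed (p * INR (S m))) as [h1 h2].
  exists (Cantor.to_nat (Z.to_nat z, Cantor.to_nat (Z.to_nat (- z), m))).
  unfold qn. rewrite !Cantor.cancel_of_to. rewrite <- IZR_split. fold z in h1, h2.
  split.
  - apply (Rmult_lt_reg_r (INR (S m))); auto. unfold Rdiv. rewrite Rmult_assoc, Rinv_l by lra. lra.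
  - apply (Rmult_lt_reg_r (INR (S m))); auto. unfold Rdiv. rewrite Rmult_assoc, Rinv_l by lra.
    assert (1 < (q - p) * INR (S m)).
    { apply (Rmult_lt_reg_l (/ INR (S m))). apply Rinv_0_lt_compat; auto.
      rewrite Rmult_1_r, (Rmult_comm (q - p)), <- Rmult_assoc, Rinv_l by lra. lra. }
    lra.
Qed.

Definition LE (A : R -> Prop) (u : R) : R :=
  epsilon (inhabits 0) (fun z => A z /\ z < u /\ forall w, z < w < u -> ~ A w).
Definition RE (A : R -> Prop) (u : R) : R :=
  epsilon (inhabits 0) (fun z => A z /\ u < z /\ forall w, u < w < z -> ~ A w).

Lemma gap_enum (A : R -> Prop) p : gap_endpoint A p ->
  exists k, p = LE A (qn k) \/ p = RE A (qn k).
Proof.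
  intros [Sp [q [Sq [Hqp Hgap]]]].
  destruct (Rlt_dec p q) as [h|h].
  - destruct (qn_dense p q h) as [k Hk]. exists k. left.
    rewrite Rmin_left, Rmax_right in Hgap by lra.
    assert (P : A p /\ p < qn k /\ forall w, p < w < qn k -> ~ A w).
    { split; auto. split; [lra|]. intros w Hw. apply Hgap; lra. }
    assert (Q := epsilon_spec (inhabits 0) (fun z => A z /\ z < qn k /\ forall w, z < w < qn k -> ~ A w) (ex_intro _ p P)).
    fold (LE A (qn k)) in Q. destruct Q as [S1 [S2 S3]].
    destruct (Rtotal_order p (LE A (qn k))) as [l|[l|l]]; auto.
    + exfalso. apply (proj2 (proj2 P) (LE A (qn k))); [split; lra|auto].
    + exfalso. apply (S3 p); [split; lra|auto].
  - assert (q < p) by (destruct (Rtotal_order p q) as [h1|[h1|h1]]; [exfalso; auto|exfalso; apply Hqp; congruence|exact h1]). destruct (qn_dense q p H) as [k Hk]. exists k. right.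
    rewrite Rmin_right, Rmax_left in Hgap by lra.
    assert (P : A p /\ qn k < p /\ forall w, qn k < w < p -> ~ A w).
    { split; auto. split; [lra|]. intros w Hw. apply Hgap; lra. }
    assert (Q := epsilon_spec (inhabits 0) (fun z => A z /\ qn k < z /\ forall w, qn k < w < z -> ~ A w) (ex_intro _ p P)).
    fold (RE A (qn k)) in Q. destruct Q as [S1 [S2 S3]].
    destruct (Rtotal_order p (RE A (qn k))) as [l|[l|l]]; auto.
    + exfalso. apply (S3 p); [split; lra|auto].
    + exfalso. apply (proj2 (proj2 P) (RE A (qn k))); [split; lra|auto].
Qed.

Lemma c_lt (c : nat -> R) N : (forall i, (i < N)%nat -> c i < c (S i)) ->
  forall i j, (i < j <= N)%nat -> c i < c j.
Proof.
  intros Hc i j. induction j; intros H; [lia|].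
  destruct (Nat.eq_dec i j). subst; apply Hc; lia.
  apply Rlt_trans with (c j). apply IHj; lia. apply Hc; lia.
Qed.

Lemma c_le (c : nat -> R) N : (forall i, (i < N)%nat -> c i < c (S i)) ->
  forall i j, (i <= j <= N)%nat -> c i <= c j.
Proof.
  intros Hc i j H. destruct (Nat.eq_dec i j). subst; lra. left; apply (c_lt c N); auto; lia.
Qed.

Lemma locate (c : nat -> R) N x : (forall i, (i < N)%nat -> c i < c (S i)) ->
  forall K, (1 <= K <= N)%nat -> c 0%nat <= x < c K -> exists i, (i < K)%nat /\ c i <= x < c (S i).
Proof.
  intros Hc K. induction K; intros HK Hx; [lia|].
  destruct (Nat.eq_dec K 0). subst. exists 0%nat. split; auto; lra.
  destruct (Rlt_dec x (c K)) as [h|h].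
  - destruct (IHK ltac:(lia) ltac:(lra)) as [i [Hi Hi2]]. exists i; split; auto; lia.
  - exists K. split; [lia|lra].
Qed.

Lemma X_cover (c : nat -> R) N x : (forall i, (i < N)%nat -> c i < c (S i)) -> (1 <= N)%nat ->
  Xint c N x -> (exists i, (i <= N)%nat /\ x = c i) \/ (exists i, (1 <= i <= N)%nat /\ piece c N i x).
Proof.
  intros Hc HN [H1 H2]. destruct (Req_dec x (c N)). left; exists N; split; auto.
  destruct (locate c N x Hc N ltac:(lia) ltac:(lra)) as [i [Hi [Hi1 Hi2]]].
  destruct (Req_dec x (c i)). left; exists i; split; [lia|auto].
  right. exists (S i). split; [lia|]. unfold piece. split.
  - destruct (Nat.eqb (S i) 1); [lra|]. replace (S i - 1)%nat with i by lia. lra.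
  - destruct (Nat.eqb (S i) N); lra.
Qed.

Definition pre (c b : nat -> R) (lam : R) (e : nat -> R) (k : nat) : R :=
  let (a, j) := Cantor.of_nat k in let (s, i) := Cantor.of_nat j in
  match s with O => c i | _ => (e a - b i) / lam end.

Lemma pre_spec (c b : nat -> R) lam (f : R -> R) N (e : nat -> R) x a :
  (forall i, (i < N)%nat -> c i < c (S i)) -> (1 <= N)%nat -> 0 < lam ->
  (forall i x, (1 <= i <= N)%nat -> piece c N i x -> f x = lam * x + b i) ->
  Xint c N x -> f x = e a -> exists k, x = pre c b lam e k.
Proof.
  intros Hc HN Hl Hf HX Hfx.
  destruct (X_cover c N x Hc HN HX) as [[i [Hi E]]|[i [Hi Hp]]].
  - exists (Cantor.to_nat (0%nat, Cantor.to_nat (0%nat, i))). unfold pre.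
    rewrite !Cantor.cancel_of_to. auto.
  - exists (Cantor.to_nat (a, Cantor.to_nat (1%nat, i))). unfold pre.
    rewrite !Cantor.cancel_of_to. rewrite (Hf i x Hi Hp) in Hfx. rewrite <- Hfx. field. lra.
Qed.

Fixpoint Eit (c b : nat -> R) (lam : R) (e0 : nat -> R) (r : nat) : nat -> R :=
  match r with O => e0 | S r' => pre c b lam (Eit c b lam e0 r') end.

Lemma Eit_spec (c b : nat -> R) lam (f : R -> R) N (e0 : nat -> R) :
  (forall i, (i < N)%nat -> c i < c (S i)) -> (1 <= N)%nat -> 0 < lam ->
  (forall i x, (1 <= i <= N)%nat -> piece c N i x -> f x = lam * x + b i) ->
  (forall x, Xint c N x -> Xint c N (f x)) ->
  forall r x a, Xint c N x -> Nat.iter r f x = e0 a -> exists k, x = Eit c b lam e0 r k.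
Proof.
  intros Hc HN Hl Hf HfX r. induction r; intros x a HX He.
  - exists a. simpl in *. auto.
  - rewrite Nat.iter_succ_r in He. destruct (IHr (f x) a (HfX x HX) He) as [k Hk].
    simpl. eapply pre_spec; eauto.
Qed.

Definition bad (c b : nat -> R) (lam : R) (e0 : nat -> R) (k : nat) : R :=
  let (r, a) := Cantor.of_nat k in Eit c b lam e0 r a.

Lemma bad_spec (c b : nat -> R) lam (f : R -> R) N (e0 : nat -> R) :
  (forall i, (i < N)%nat -> c i < c (S i)) -> (1 <= N)%nat -> 0 < lam ->
  (forall i x, (1 <= i <= N)%nat -> piece c N i x -> f x = lam * x + b i) ->
  (forall x, Xint c N x -> Xint c N (f x)) ->
  forall x, Xint c N x -> (forall k, x <> bad c b lam e0 k) ->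
  forall r a, Nat.iter r f x <> e0 a.
Proof.
  intros Hc HN Hl Hf HfX x HX Hb r a E.
  destruct (Eit_spec c b lam f N e0 Hc HN Hl Hf HfX r x a HX E) as [k Hk].
  apply (Hb (Cantor.to_nat (r, k))). unfold bad. rewrite Cantor.cancel_of_to. auto.
Qed.

Definition B0 (Lam : R -> Prop) (f : R -> R) (c b : nat -> R) (lam : R) (N : nat) (k : nat) : R :=
  let (t, a) := Cantor.of_nat k in
  match t with
  | O => c a
  | 1%nat => LE Lam (qn a)
  | 2%nat => RE Lam (qn a)
  | 3%nat => Nat.iter a f (c 0%nat)
  | 4%nat => Nat.iter a f (c N)
  | 5%nat => let (n, i) := Cantor.of_nat a in Nat.iter n f (fext lam b i (c i))
  | _ => let (n, i) := Cantor.of_nat a in Nat.iter n f (fext lam b (i + 1) (c i))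
  end.

Lemma B0_c Lam f c b lam N a : exists k, B0 Lam f c b lam N k = c a.
Proof. exists (Cantor.to_nat (0%nat, a)). unfold B0. rewrite Cantor.cancel_of_to. auto. Qed.
Lemma B0_gap Lam f c b lam N p : gap_endpoint Lam p -> exists k, B0 Lam f c b lam N k = p.
Proof.
  intros H. destruct (gap_enum Lam p H) as [a [E|E]].
  - exists (Cantor.to_nat (1%nat, a)). unfold B0. rewrite Cantor.cancel_of_to. auto.
  - exists (Cantor.to_nat (2%nat, a)). unfold B0. rewrite Cantor.cancel_of_to. auto.
Qed.
Lemma B0_c0 Lam f c b lam N n : exists k, B0 Lam f c b lam N k = Nat.iter n f (c 0%nat).
Proof. exists (Cantor.to_nat (3%nat, n)). unfold B0. rewrite Cantor.cancel_of_to. auto. Qed.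
Lemma B0_cN Lam f c b lam N n : exists k, B0 Lam f c b lam N k = Nat.iter n f (c N).
Proof. exists (Cantor.to_nat (4%nat, n)). unfold B0. rewrite Cantor.cancel_of_to. auto. Qed.
Lemma B0_fl Lam f c b lam N n i : exists k, B0 Lam f c b lam N k = Nat.iter n f (fext lam b i (c i)).
Proof. exists (Cantor.to_nat (5%nat, Cantor.to_nat (n, i))). unfold B0. rewrite !Cantor.cancel_of_to. auto. Qed.
Lemma B0_fr Lam f c b lam N n i : exists k, B0 Lam f c b lam N k = Nat.iter n f (fext lam b (i + 1) (c i)).
Proof. exists (Cantor.to_nat (6%nat, Cantor.to_nat (n, i))). unfold B0. rewrite !Cantor.cancel_of_to. auto. Qed.

Lemma atom_snoc h Zp Z w i : atom_of_word h Zp Z (w ++ i :: nil) = Fmap h Zp i (atom_of_word h Zp Z w).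
Proof. unfold atom_of_word. rewrite fold_left_app. reflexivity. Qed.

Lemma rclosure_incl (A : R -> Prop) x : A x -> rclosure A x.
Proof. intros H eps He. exists x. split; auto. rewrite Rminus_diag, Rabs_R0; auto. Qed.

Lemma rclosure_diam (A : R -> Prop) D :
  (forall a b, A a -> A b -> Rabs (a - b) <= D) ->
  forall x y, rclosure A x -> rclosure A y -> Rabs (x - y) <= D.
Proof.
  intros HD x y Hx Hy. destruct (Rle_dec (Rabs (x - y)) D) as [h|h]; auto. exfalso.
  set (eps := (Rabs (x - y) - D) / 2).
  destruct (Hx eps ltac:(unfold eps; lra)) as [a [Aa Ha]].
  destruct (Hy eps ltac:(unfold eps; lra)) as [b' [Ab Hb]].
  specialize (HD a b' Aa Ab).
  pose proof (Rabs_triang (x - a) (a - y)). pose proof (Rabs_triang (a - b') (b' - y)).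
  replace (x - a + (a - y)) with (x - y) in H by ring.
  replace (a - b' + (b' - y)) with (a - y) in H0 by ring.
  rewrite Rabs_minus_sym with (x := b') in H0. unfold eps in *. lra.
Qed.

Lemma rclosure_interval (A : R -> Prop) u v :
  (forall a, A a -> u <= a <= v) -> forall x, rclosure A x -> u <= x <= v.
Proof.
  intros HA x Hx. split.
  - destruct (Rle_dec u x) as [h|h]; auto. exfalso.
    destruct (Hx (u - x) ltac:(lra)) as [a [Aa Ha]]. specialize (HA a Aa).
    rewrite Rabs_left in Ha by lra. lra.
  - destruct (Rle_dec x v) as [h|h]; auto. exfalso.
    destruct (Hx (x - v) ltac:(lra)) as [a [Aa Ha]]. specialize (HA a Aa).
    rewrite Rabs_right in Ha by lra. lra.
Qed.

Lemma rclosure_closed (A : R -> Prop) x : rclosure (rclosure A) x -> rclosure A x.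
Proof.
  intros H eps He. destruct (H (eps/2) ltac:(lra)) as [a [Aa Ha]].
  destruct (Aa (eps/2) ltac:(lra)) as [a' [Aa' Ha']]. exists a'. split; auto.
  pose proof (Rabs_triang (x - a) (a - a')). replace (x - a + (a - a')) with (x - a') in H0 by ring. lra.
Qed.

Lemma piece_bounds c N i x : (1 <= i)%nat -> piece c N i x -> c (i - 1)%nat <= x /\ (Xint c N x -> x <= c i).
Proof.
  intros Hi [H1 H2]. split.
  - destruct (Nat.eqb_spec i 1). subst. simpl. auto. lra.
  - intros [_ HX]. destruct (Nat.eqb_spec i N). subst; auto. lra.
Qed.

Lemma atom_diam f lam b c N : propP1 f lam b c N ->
  forall w, List.Forall (fun i => (1 <= i <= N)%nat) w ->
  forall x y, atom_of_word f (piece c N) (Xint c N) w x -> atom_of_word f (piece c N) (Xint c N) w y ->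
  Rabs (x - y) <= lam ^ (length w) * (c N - c 0%nat).
Proof.
  intros [_ [Hlam Hf]] w. induction w as [|j w IHw] using rev_ind; intros Hw x y Hx Hy.
  - simpl in *. destruct Hx, Hy. simpl. unfold Rabs; destruct (Rcase_abs (x - y)); lra.
  - apply Forall_app in Hw as [Hw1 Hw2]. inversion Hw2; subst.
    rewrite atom_snoc in Hx, Hy. rewrite length_app. simpl. rewrite Nat.add_1_r. simpl.
    revert x y Hx Hy. apply rclosure_diam.
    intros a a' [z [Az [Pz Ez]]] [z' [Az' [Pz' Ez']]]. subst.
    rewrite (Hf j z H1 Pz), (Hf j z' H1 Pz').
    replace (lam * z + b j - (lam * z' + b j)) with (lam * (z - z')) by ring.
    rewrite Rabs_mult, Rabs_right by lra. rewrite Rmult_assoc. apply Rmult_le_compat_l; [lra|].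
    apply IHw; auto.
Qed.

Definition convex (A : R -> Prop) : Prop := forall x y z, A x -> A y -> x <= z <= y -> A z.

Lemma rclosure_convex A : convex A -> convex (rclosure A).
Proof.
  intros HA x y z Hx Hy Hz.
  destruct (Req_dec z x). subst; auto. destruct (Req_dec z y). subst; auto.
  apply rclosure_incl.
  destruct (Hx (z - x) ltac:(lra)) as [a [Aa Ha]]. destruct (Hy (y - z) ltac:(lra)) as [a' [Aa' Ha']].
  apply (HA a a'); auto. unfold Rabs in *. destruct (Rcase_abs (x - a)); destruct (Rcase_abs (y - a')); lra.
Qed.

Lemma piece_convex c N i : convex (piece c N i).
Proof.
  intros x y z [Hx1 Hx2] [Hy1 Hy2] Hz. unfold piece. split.
  - destruct (Nat.eqb i 1); lra.
  - destruct (Nat.eqb i N); lra.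
Qed.

Lemma Fmap_convex f lam b c N i A : 0 < lam -> (1 <= i <= N)%nat ->
  (forall x, piece c N i x -> f x = lam * x + b i) -> convex A ->
  convex (Fmap f (piece c N) i A).
Proof.
  intros Hl Hi Hf HA. apply rclosure_convex.
  intros y1 y2 z [x1 [A1 [P1 E1]]] [x2 [A2 [P2 E2]]] Hz.
  rewrite Hf in E1, E2 by auto. subst.
  exists ((z - b i) / lam). assert (x1 <= (z - b i) / lam <= x2).
  { split; apply (Rmult_le_reg_l lam); auto; field_simplify; lra. }
  split; [apply (HA x1 x2); auto|]. split; [apply (piece_convex c N i x1 x2); auto|].
  rewrite Hf. field. lra. apply (piece_convex c N i x1 x2); auto.
Qed.

Lemma atom_convex f lam b c N : propP1 f lam b c N ->
  forall w, List.Forall (fun i => (1 <= i <= N)%nat) w -> convex (atom_of_word f (piece c N) (Xint c N) w).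
Proof.
  intros [_ [Hlam Hf]] w. induction w as [|j w IHw] using rev_ind; intros Hw.
  - simpl. intros x y z [] [] ?. split; lra.
  - apply Forall_app in Hw as [Hw1 Hw2]. inversion Hw2; subst. rewrite atom_snoc.
    apply (Fmap_convex f lam b c N); auto. lra.
Qed.

Definition Atom1 f c N i := Fmap f (piece c N) i (Xint c N).

Lemma fext_F_left f lam b c N i A q : propP1 f lam b c N -> (1 <= i <= N - 1)%nat ->
  convex A -> A (c i) -> A q -> piece c N i q -> Fmap f (piece c N) i A (fext lam b i (c i)).
Proof.
  intros [_ [Hl Hf]] Hi HA Aci Aq Pq eps He.
  assert (Hq : q < c i).
  { destruct Pq as [_ P2]. destruct (Nat.eqb_spec i N); [lia|auto]. }
  set (z := Rmax q (c i - eps / (2 * lam))).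
  assert (Hz1 : q <= z) by apply Rmax_l.
  assert (Hz2 : c i - eps / (2 * lam) <= z) by apply Rmax_r.
  assert (Hz3 : z < c i).
  { unfold z. apply Rmax_lub_lt; auto. assert (0 < eps / (2 * lam)) by (apply Rdiv_lt_0_compat; lra). lra. }
  assert (Pz : piece c N i z).
  { destruct Pq as [P1 P2]. split.
    - destruct (Nat.eqb i 1); lra.
    - destruct (Nat.eqb_spec i N); [lia|auto]. }
  exists (f z). split.
  - exists z. split; [apply (HA q (c i)); auto; lra|]. split; auto.
  - rewrite (Hf i z ltac:(lia) Pz). unfold fext.
    replace (lam * c i + b i - (lam * z + b i)) with (lam * (c i - z)) by ring.
    rewrite Rabs_right by (apply Rle_ge, Rmult_le_pos; lra).
    assert (lam * (c i - z) <= lam * (eps / (2 * lam))) by (apply Rmult_le_compat_l; lra).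
    replace (lam * (eps / (2 * lam))) with (eps / 2) in H by (field; lra). lra.
Qed.

Lemma fext_F_right f lam b c N i A q : propP1 f lam b c N -> (1 <= i <= N - 1)%nat ->
  convex A -> A (c i) -> A q -> piece c N (i + 1) q ->
  Fmap f (piece c N) (i + 1) A (fext lam b (i + 1) (c i)).
Proof.
  intros [_ [Hl Hf]] Hi HA Aci Aq Pq eps He.
  assert (Hq : c i < q).
  { destruct Pq as [P1 _]. destruct (Nat.eqb_spec (i + 1) 1); [lia|].
    replace (i + 1 - 1)%nat with i in P1 by lia. auto. }
  set (z := Rmin q (c i + eps / (2 * lam))).
  assert (Hz1 : z <= q) by apply Rmin_l.
  assert (Hz2 : z <= c i + eps / (2 * lam)) by apply Rmin_r.
  assert (Hz3 : c i < z).
  { unfold z. apply Rmin_glb_lt; auto. assert (0 < eps / (2 * lam)) by (apply Rdiv_lt_0_compat; lra). lra. }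
  assert (Pz : piece c N (i + 1) z).
  { destruct Pq as [P1 P2]. split.
    - destruct (Nat.eqb_spec (i + 1) 1); [lia|]. replace (i + 1 - 1)%nat with i by lia. lra.
    - destruct (Nat.eqb (i + 1) N); lra. }
  exists (f z). split.
  - exists z. split; [apply (HA (c i) q); auto; lra|]. split; auto.
  - rewrite (Hf (i + 1)%nat z ltac:(lia) Pz). unfold fext.
    replace (lam * c i + b (i + 1)%nat - (lam * z + b (i + 1)%nat)) with (- (lam * (z - c i))) by ring.
    rewrite Rabs_Ropp, Rabs_right by (apply Rle_ge, Rmult_le_pos; lra).
    assert (lam * (z - c i) <= lam * (eps / (2 * lam))) by (apply Rmult_le_compat_l; lra).
    replace (lam * (eps / (2 * lam))) with (eps / 2) in H by (field; lra). lra.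
Qed.

Lemma atom1_is f c N i z : (1 <= i <= N)%nat -> Atom1 f c N i z -> is_atom f (piece c N) (Xint c N) N 1 (Atom1 f c N i).
Proof.
  intros Hi Hz. exists (i :: nil). split; [split; [reflexivity|constructor; auto]|].
  split; [intros x; unfold Atom1; simpl; tauto|]. exists z; auto.
Qed.

Lemma fext_Lambda f lam b c N i : (2 <= N)%nat -> (forall j, (j < N)%nat -> c j < c (S j)) ->
  propP1 f lam b c N -> propP4 f lam b c N -> propP6 f c N -> (1 <= i <= N - 1)%nat ->
  (Lambda_f f c N (fext lam b i (c i)) /\ Atom1 f c N i (fext lam b i (c i))) /\
  (Lambda_f f c N (fext lam b (i + 1) (c i)) /\ Atom1 f c N (i + 1) (fext lam b (i + 1) (c i))).
Proof.
  intros HN Hc H1 H4 H6 Hi.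
  destruct (H4 1%nat ltac:(lia)) as [Hx _]. set (x := fext lam b 1 (c 1%nat)) in Hx.
  assert (Hci : Xint c N (c i)) by (split; apply (c_le c N); auto; lia).
  pose proof Hci as [Hci1 Hci2].
  assert (HXc : convex (Xint c N)) by (intros a a' z [] [] ?; split; lra).
  assert (Hlt1 : c (i - 1)%nat < c i) by (apply (c_lt c N); auto; lia).
  assert (Hlt2 : c i < c (i + 1)%nat) by (apply (c_lt c N); auto; lia).
  assert (HL : Atom1 f c N i (fext lam b i (c i))).
  { apply (fext_F_left f lam b c N i _ ((c (i - 1)%nat + c i) / 2)); auto.
    - split; [assert (c 0%nat <= c (i - 1)%nat) by (apply (c_le c N); auto; lia)|]; lra.
    - split. destruct (Nat.eqb i 1); [|lra]. assert (c 0%nat <= c (i - 1)%nat) by (apply (c_le c N); auto; lia). lra.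
      destruct (Nat.eqb_spec i N); [lia|lra]. }
  assert (HR : Atom1 f c N (i + 1) (fext lam b (i + 1) (c i))).
  { apply (fext_F_right f lam b c N i _ ((c (i + 1)%nat + c i) / 2)); auto.
    - split; [|assert (c (i + 1)%nat <= c N) by (apply (c_le c N); auto; lia)]; lra.
    - split. destruct (Nat.eqb_spec (i + 1) 1); [lia|]. replace (i + 1 - 1)%nat with i by lia. lra.
      destruct (Nat.eqb (i + 1) N); [assert (c (i + 1)%nat <= c N) by (apply (c_le c N); auto; lia)|]; lra. }
  split; split; auto.
  - intros n Hn. destruct (Nat.eq_dec n 1). subst. exists (Atom1 f c N i). split; auto. apply (atom1_is f c N i _ ltac:(lia) HL).
    destruct (H6 x i Hx Hi) as [_ Hd]. destruct (Hd (n - 1)%nat ltac:(lia)) as [A [[[w [[Hw1 Hw2] [Hw3 _]]] _] [Aci [[t [At Pt]] _]]]].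
    exists (atom_of_word f (piece c N) (Xint c N) (w ++ i :: nil)).
    assert (Hz : atom_of_word f (piece c N) (Xint c N) (w ++ i :: nil) (fext lam b i (c i))).
    { rewrite atom_snoc. eapply fext_F_left; eauto. apply (atom_convex f lam b c N H1 w Hw2).
      apply Hw3; auto. apply Hw3; eauto. }
    split; auto. exists (w ++ i :: nil). split; [split|].
    + rewrite length_app; simpl; lia.
    + apply Forall_app; split; auto. constructor; auto; lia.
    + split; [tauto|eauto].
  - intros n Hn. destruct (Nat.eq_dec n 1). subst. exists (Atom1 f c N (i + 1)). split; auto. apply (atom1_is f c N (i + 1) _ ltac:(lia) HR).
    destruct (H6 x i Hx Hi) as [_ Hd]. destruct (Hd (n - 1)%nat ltac:(lia)) as [A [[[w [[Hw1 Hw2] [Hw3 _]]] _] [Aci [_ [t [At Pt]]]]]].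
    exists (atom_of_word f (piece c N) (Xint c N) (w ++ (i + 1)%nat :: nil)).
    assert (Hz : atom_of_word f (piece c N) (Xint c N) (w ++ (i + 1)%nat :: nil) (fext lam b (i + 1) (c i))).
    { rewrite atom_snoc. eapply fext_F_right; eauto. apply (atom_convex f lam b c N H1 w Hw2).
      apply Hw3; auto. apply Hw3; eauto. }
    split; auto. exists (w ++ (i + 1)%nat :: nil). split; [split|].
    + rewrite length_app; simpl; lia.
    + apply Forall_app; split; auto. constructor; auto; lia.
    + split; [tauto|eauto].
Qed.

Definition Iv (lam : R) (b c : nat -> R) (i : nat) (z : R) : Prop :=
  lam * c (i - 1)%nat + b i <= z <= lam * c i + b i.

Lemma A1_Iv f lam b c N i z : propP1 f lam b c N -> (1 <= i <= N)%nat -> Atom1 f c N i z -> Iv lam b c i z.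
Proof.
  intros [_ [Hl Hf]] Hi Hz. unfold Iv. revert z Hz. apply rclosure_interval.
  intros a [x [HX [Px E]]]. subst. rewrite (Hf i x Hi Px).
  destruct (piece_bounds c N i x ltac:(lia) Px) as [h1 h2]. specialize (h2 HX).
  split; apply Rplus_le_compat_r; apply Rmult_le_compat_l; lra.
Qed.

Lemma Iv_disj lam b c N i j z : 0 < lam -> propP2 lam b c N -> (1 <= i <= N)%nat -> (1 <= j <= N)%nat ->
  Iv lam b c i z -> Iv lam b c j z -> i = j.
Proof.
  intros Hl [_ H2] Hi Hj Hzi Hzj. destruct (Nat.eq_dec i j) as [e|ne]; auto. exfalso.
  apply (H2 i j ((z - b i) / lam) ((z - b j) / lam) Hi Hj ne).
  - unfold Iv in Hzi. split; apply (Rmult_le_reg_l lam); auto; field_simplify; lra.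
  - unfold Iv in Hzj. split; apply (Rmult_le_reg_l lam); auto; field_simplify; lra.
  - unfold fext. field; lra.
Qed.

Lemma Lambda_A1 f c N z : Lambda_f f c N z -> exists i, (1 <= i <= N)%nat /\ Atom1 f c N i z.
Proof.
  intros H. destruct (H 1%nat (le_n 1)) as [A [[w [[Hw1 Hw2] [Hw3 _]]] Az]].
  destruct w as [|i [|? ?]]; simpl in Hw1; try lia.
  inversion Hw2; subst. exists i. split; auto. apply Hw3 in Az. exact Az.
Qed.

Lemma pigeon : forall n k (Rel : nat -> nat -> Prop),
  (forall i, (1 <= i <= n)%nat -> exists j, (1 <= j <= k)%nat /\ Rel i j) ->
  (forall i i' j, (1 <= i <= n)%nat -> (1 <= i' <= n)%nat -> Rel i j -> Rel i' j -> i = i') ->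
  (n <= k)%nat.
Proof.
  induction n; intros k Rel Hex Hinj; [lia|].
  destruct (Hex (S n) ltac:(lia)) as [j0 [Hj0 R0]].
  set (Rel' := fun i j => Rel i (if Nat.ltb j j0 then j else S j)).
  assert (n <= k - 1)%nat.
  { apply (IHn (k - 1)%nat Rel').
    - intros i Hi. destruct (Hex i ltac:(lia)) as [j [Hj Rj]].
      destruct (Nat.eq_dec j j0). { subst. specialize (Hinj i (S n) j0 ltac:(lia) ltac:(lia) Rj R0). lia. }
      destruct (Nat.ltb_spec j j0).
      + exists j. split; [lia|]. unfold Rel'. destruct (Nat.ltb_spec j j0); [auto|lia].
      + exists (j - 1)%nat. split; [lia|]. unfold Rel'. destruct (Nat.ltb_spec (j - 1) j0); [lia|].
        replace (S (j - 1)) with j by lia. auto.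
    - intros i i' j Hi Hi' R1 R2. unfold Rel' in *. apply (Hinj i i' _ ltac:(lia) ltac:(lia) R1 R2). }
  lia.
Qed.

Lemma choose_i0 f lam b c N : (2 <= N)%nat -> propP1 f lam b c N -> propP2 lam b c N ->
  exists i0, (1 <= i0 <= N)%nat /\ forall m, (1 <= m <= N - 1)%nat -> ~ Atom1 f c N i0 (c m).
Proof.
  intros HN H1 H2. apply NNPP. intros Hn.
  assert (Hall : forall i, (1 <= i <= N)%nat -> exists m, (1 <= m <= N - 1)%nat /\ Atom1 f c N i (c m)).
  { intros i Hi. apply NNPP. intros h. apply Hn. exists i. split; auto. intros m Hm Hc. apply h. eauto. }
  assert (N <= N - 1)%nat; [|lia].
  apply (pigeon N (N - 1) (fun i m => Atom1 f c N i (c m)) Hall).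
  intros i i' m Hi Hi' R1 R2. pose proof H1 as [_ [Hl _]].
  apply (Iv_disj lam b c N i i' (c m) ltac:(lra) H2 Hi Hi');
    [apply (A1_Iv f lam b c N i); auto | apply (A1_Iv f lam b c N i'); auto].
Qed.

Lemma no_period f lam b c N x : (2 <= N)%nat -> (forall j, (j < N)%nat -> c j < c (S j)) ->
  propP1 f lam b c N -> propP6 f c N -> Xtilde f c N x ->
  forall n m, (n < m)%nat -> Nat.iter n f x <> Nat.iter m f x.
Proof.
  intros HN Hc H1 H6 Hx n m Hnm E.
  assert (Hfin : forall k, exists k', (k' < m)%nat /\ Nat.iter k f x = Nat.iter k' f x).
  { intros k. induction k as [k IH] using (well_founded_induction Wf_nat.lt_wf).
    destruct (Compare_dec.lt_dec k m) as [h|h]. exists k; auto.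
    replace k with ((k - m) + m)%nat by lia. rewrite Nat.iter_add, <- E, <- Nat.iter_add.
    apply IH. lia. }
  destruct (fin_min (fun _ => True) (fun k => Rabs (Nat.iter k f x - c 1%nat)) (m - 1)) as [δ [Hδ Hδ2]].
  { intros k _ _. apply Rabs_pos_lt. intros h. destruct (Hx k) as [_ Hd]. apply Hd.
    exists 1%nat. split; [lia|lra]. }
  assert (HL : 0 < c N - c 0%nat) by (pose proof (c_lt c N Hc 0 N ltac:(lia)); lra).
  destruct H1 as [H1a [Hl H1c]].
  destruct (pow_lt_1_zero lam ltac:(rewrite Rabs_right; lra) (δ / (c N - c 0%nat))
     ltac:(apply Rdiv_lt_0_compat; lra)) as [N0 HN0].
  specialize (HN0 (S N0) ltac:(lia)). rewrite Rabs_right in HN0 by (apply Rle_ge, pow_le; lra).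
  destruct (H6 x 1%nat Hx ltac:(lia)) as [_ Hd].
  destruct (Hd (S N0) ltac:(lia)) as [A [[[w [[Hw1 Hw2] [Hw3 _]]] _] [Ac [[t [At _]] _]]]].
  pose proof (atom_diam f lam b c N (conj H1a (conj Hl H1c)) w Hw2 _ _ (proj1 (Hw3 _) At) (proj1 (Hw3 _) Ac)) as Hdiam.
  rewrite Hw1 in Hdiam.
  destruct (Hfin (t + S N0)%nat) as [k' [Hk' Ek']]. rewrite Ek' in Hdiam.
  specialize (Hδ2 k' ltac:(lia) I).
  assert (lam ^ S N0 * (c N - c 0%nat) < δ).
  { apply (Rmult_lt_reg_r (/ (c N - c 0%nat))). apply Rinv_0_lt_compat; lra.
    rewrite Rmult_assoc, Rinv_r by lra. lra. }
  lra.
Qed.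

Lemma rclosure_mono (A B : R -> Prop) x : (forall y, A y -> B y) -> rclosure A x -> rclosure B x.
Proof. intros H Hx eps He. destruct (Hx eps He) as [a [Aa Ha]]. exists a; auto. Qed.

Lemma Atom1_X f c N i z : (forall x, Xint c N x -> Xint c N (f x)) -> Atom1 f c N i z -> Xint c N z.
Proof.
  intros HfX Hz. unfold Xint. revert z Hz. apply rclosure_interval.
  intros a [x [HX [_ E]]]. subst. apply HfX; auto.
Qed.

Lemma exists_x0 N c f lam b :
  (2 <= N)%nat -> (forall i, (i < N)%nat -> c i < c (S i)) ->
  (forall x, Xint c N x -> Xint c N (f x)) ->
  propP1 f lam b c N -> propP2 lam b c N -> propP3 f c N -> propP4 f lam b c N -> propP6 f c N ->
  exists x0 i0, (1 <= i0 <= N)%nat /\ (forall m, (1 <= m <= N - 1)%nat -> ~ Atom1 f c N i0 (c m)) /\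
    Iv lam b c i0 x0 /\ Lambda_f f c N x0 /\ Xint c N x0 /\
    (forall r k, Nat.iter r f x0 <> B0 (Lambda_f f c N) f c b lam N k).
Proof.
  intros HN Hc HfX H1 H2 H3 H4 H6.
  destruct (choose_i0 f lam b c N HN H1 H2) as [i0 [Hi0 Hno]].
  pose proof H1 as [_ [Hl Hf]].
  set (K := fun z => Lambda_f f c N z /\ Iv lam b c i0 z).
  destruct H3 as [_ [Hcl [_ [Hperf _]]]].
  destruct (avoid_countable K (bad c b lam (B0 (Lambda_f f c N) f c b lam N))) as [x0 [[Lx0 Ix0] Hx0]].
  - destruct (Nat.eq_dec i0 N) as [e|ne].
    + destruct (fext_Lambda f lam b c N (N - 1) HN Hc H1 H4 H6 ltac:(lia)) as [_ [La Aa]].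
      replace (N - 1 + 1)%nat with N in La, Aa by lia. subst i0.
      eexists; split; eauto. apply (A1_Iv f lam b c N N); auto; lia.
    + destruct (fext_Lambda f lam b c N i0 HN Hc H1 H4 H6 ltac:(lia)) as [[La Aa] _].
      eexists; split; eauto. apply (A1_Iv f lam b c N i0); auto.
  - intros x Hx. split.
    + apply Hcl. revert Hx. apply rclosure_mono. intros y []; auto.
    + unfold Iv. revert x Hx. apply rclosure_interval. intros a [_ h]. exact h.
  - intros z [Lz Iz] eps He.
    destruct (fin_min (fun j => (1 <= j)%nat /\ j <> i0)
      (fun j => Rmax (lam * c (j - 1)%nat + b j - z) (z - (lam * c j + b j))) N) as [δ [Hδ Hδ2]].
    { intros j Hj [Hj1 Hj2]. destruct (Rlt_dec 0 (lam * c (j - 1)%nat + b j - z)) as [h|h].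
      - eapply Rlt_le_trans; [exact h|apply Rmax_l].
      - destruct (Rlt_dec 0 (z - (lam * c j + b j))) as [h'|h'].
        + eapply Rlt_le_trans; [exact h'|apply Rmax_r].
        + exfalso. apply Hj2. apply (Iv_disj lam b c N j i0 z); auto; try lra; try lia.
          unfold Iv; lra. }
    destruct (Hperf z Lz (Rmin eps δ) (Rmin_pos _ _ He Hδ)) as [y [Ly [Hyz Hd]]].
    pose proof (Rmin_l eps δ). pose proof (Rmin_r eps δ).
    exists y. split; [|split; [auto|lra]]. split; auto.
    destruct (Lambda_A1 f c N y Ly) as [j [Hj Aj]].
    pose proof (A1_Iv f lam b c N j y H1 Hj Aj) as Ij.
    destruct (Nat.eq_dec j i0) as [e|ne]. subst; auto.
    exfalso. specialize (Hδ2 j ltac:(lia) (conj (proj1 Hj) ne)).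
    assert (Rmax (lam * c (j - 1)%nat + b j - z) (z - (lam * c j + b j)) <= Rabs (y - z)).
    { unfold Iv in Ij. apply Rmax_lub; unfold Rabs; destruct (Rcase_abs (y - z)); lra. }
    lra.
  - exists x0, i0. destruct (Lambda_A1 f c N x0 Lx0) as [j [Hj Aj]].
    assert (HX0 : Xint c N x0) by (eapply Atom1_X; eauto).
    split; [auto|]. split; [exact Hno|]. split; [auto|]. split; [auto|]. split; [auto|].
    intros r k E. apply (bad_spec c b lam f N _ Hc ltac:(lia) ltac:(lra) Hf HfX x0 HX0 Hx0 r k E).
Qed.

Lemma main_g N c f lam b (xi : nat -> R) i0 :
  (2 <= N)%nat -> (forall i, (i < N)%nat -> c i < c (S i)) ->
  propP1 f lam b c N -> propP2 lam b c N ->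
  gen1_atoms_at_most_one f (piece c N) (Xint c N) N (DeltaF c N) ->
  (1 <= i0 <= N)%nat -> (forall m, (1 <= m <= N - 1)%nat -> ~ Atom1 f c N i0 (c m)) ->
  Iv lam b c i0 (xi 0%nat) ->
  (forall r, Xint c N (xi r)) -> (forall r a, xi r <> c a) ->
  (forall n m, n <> m -> xi n <> xi m) -> (forall r, xi (S r) = f (xi r)) ->
    forall (g : R -> R) (d : nat -> R),
      (forall y, phi lam xi (c 0%nat) <= y <= phi lam xi (c N) ->
                 phi lam xi (c 0%nat) <= g y <= phi lam xi (c N)) ->
      (forall x, Xint c N x -> ~ Delta_g lam xi c N (phi lam xi x) ->
                 g (phi lam xi x) = phi lam xi (f x)) ->
      (forall r y, (1 <= r)%nat -> Gr lam xi r y ->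
                   g y = lam * (y - phi lam xi (xi r)) + phi lam xi (xi (S r))) ->
      (forall j, (j < N + 1)%nat -> d j < d (S j)) ->
      (forall y, (exists j, (j <= N + 1)%nat /\ y = d j) <->
                 (exists x, ((exists i, (i <= N)%nat /\ x = c i) \/ x = xi 0%nat)
                            /\ y = phi lam xi x)) ->
      gen1_atoms_at_most_one g (piece d (N + 1)) (Xint d (N + 1)) (N + 1)
                             (Delta_g lam xi c N).
Proof.
  intros HN Hc H1 H2 Hgen Hi0 Hno Ix0 HX Hnc Hdist Hxs g d _ Hg2 Hg3 Hd1 Hd2.
  pose proof H1 as [_ [Hl Hf]].
  set (P := phi lam xi).
  set (E := fun x => (exists i, (i <= N)%nat /\ x = c i) \/ x = xi 0%nat).
  assert (Hdlt : forall k l, (k < l <= N + 1)%nat -> d k < d l) by (apply c_lt; auto).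
  assert (Hdle : forall k l, (k <= l <= N + 1)%nat -> d k <= d l) by (apply c_le; auto).
  assert (HdE : forall k, (k <= N + 1)%nat -> exists e, E e /\ d k = P e).
  { intros k Hk. destruct (proj1 (Hd2 (d k)) (ex_intro _ k (conj Hk eq_refl))) as [e [He1 He2]]. eauto. }
  assert (HEd : forall e, E e -> exists k, (k <= N + 1)%nat /\ P e = d k).
  { intros e He. destruct (proj2 (Hd2 (P e)) (ex_intro _ e (conj He eq_refl))) as [k [Hk1 Hk2]]. eauto. }
  assert (HEX : forall e, E e -> c 0%nat <= e <= c N).
  { intros e [[i [Hi Ei]]|Ei]; subst e. split; apply (c_le c N); auto; lia. apply HX. }
  assert (Hc0N : c 0%nat < c N) by (apply (c_lt c N); auto; lia).
  assert (Hd0 : d 0%nat = P (c 0%nat)).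
  { destruct (HdE 0%nat ltac:(lia)) as [e [He E0]].
    destruct (HEd (c 0%nat) (or_introl (ex_intro _ 0%nat (conj (Nat.le_0_l N) eq_refl)))) as [k [Hk Ek]].
    pose proof (Hdle 0%nat k ltac:(lia)). rewrite E0, <- Ek in H.
    apply phi_le_inv in H; auto. destruct (HEX e He). replace e with (c 0%nat) in E0 by lra. auto. }
  assert (HdN : d (N + 1)%nat = P (c N)).
  { destruct (HdE (N + 1)%nat ltac:(lia)) as [e [He E0]].
    destruct (HEd (c N) (or_introl (ex_intro _ N (conj (Nat.le_refl N) eq_refl)))) as [k [Hk Ek]].
    pose proof (Hdle k (N + 1)%nat ltac:(lia)). rewrite E0, <- Ek in H.
    apply phi_le_inv in H; auto. destruct (HEX e He). replace e with (c N) in E0 by lra. auto. }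
  assert (HDk : forall y, Delta_g lam xi c N y -> exists k, (1 <= k <= N)%nat /\ y = d k).
  { intros y [x [Hx Ey]]. subst y.
    assert (Ex : E x) by (destruct Hx as [[m [Hm Em]]|Em]; subst x; [left; exists m; split; [lia|auto]|right; auto]).
    destruct (HEd x Ex) as [k [Hk Ek]]. exists k. split; auto.
    assert (Hx0 : c 0%nat < x < c N).
    { destruct Hx as [[m [Hm Em]]|Em]; subst x.
      - split; apply (c_lt c N); auto; lia.
      - destruct (HX 0%nat) as [h1 h2]. pose proof (Hnc 0%nat 0%nat). pose proof (Hnc 0%nat N). lra. }
    split.
    - destruct (Nat.eq_dec k 0); [|lia]. subst. rewrite Hd0 in Ek. apply phi_inj in Ek; auto. lra.
    - destruct (Nat.eq_dec k (N + 1)); [|lia]. subst. rewrite HdN in Ek. apply phi_inj in Ek; auto. lra. }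
  intros A [w [[Hw1 Hw2] [Hw3 _]]] y1 y2 Ay1 Ay2 Dy1 Dy2.
  destruct w as [|j [|? ?]]; simpl in Hw1; try lia. inversion Hw2 as [|? ? Hj _]; subst.
  apply Hw3 in Ay1. apply Hw3 in Ay2. simpl in Ay1, Ay2.
  destruct (HdE (j - 1)%nat ltac:(lia)) as [a [Ea Pa]].
  destruct (HdE j ltac:(lia)) as [bb [Eb Pb]].
  assert (Hab : a < bb).
  { apply (phi_lt_inv lam xi); auto. fold P. rewrite <- Pa, <- Pb. apply Hdlt; lia. }
  assert (Hnotbetween : forall e, E e -> ~ (a < e < bb)).
  { intros e He [h1 h2]. destruct (HEd e He) as [k [Hk Ek]].
    apply (phi_lt lam xi) in h1; auto. apply (phi_lt lam xi) in h2; auto. fold P in h1, h2.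
    rewrite <- Pa, Ek in h1. rewrite <- Pb, Ek in h2.
    destruct (Compare_dec.le_lt_dec k (j - 1)).
    - pose proof (Hdle k (j - 1)%nat ltac:(lia)). lra.
    - pose proof (Hdle j k ltac:(lia)). lra. }
  assert (Hi : exists i, (1 <= i <= N)%nat /\ c (i - 1)%nat <= a /\ bb <= c i /\
                 (j = 1%nat -> i = 1%nat) /\ (j = (N + 1)%nat -> i = N)).
  { pose proof (HEX a Ea). pose proof (HEX bb Eb).
    destruct (locate c N a Hc N ltac:(lia) ltac:(lra)) as [i' [Hi' [Hi'1 Hi'2]]].
    exists (S i'). replace (S i' - 1)%nat with i' by lia.
    assert (Hb : bb <= c (S i')).
    { destruct (Rle_dec bb (c (S i'))) as [h|h]; auto. exfalso.
      apply (Hnotbetween (c (S i'))). left; exists (S i'); split; [lia|auto]. lra. }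
    split; [lia|]. split; [lra|]. split; [auto|]. split.
    - intros Ej. subst j. simpl in Pa. rewrite Hd0 in Pa. apply phi_inj in Pa; auto. subst a.
      destruct (Nat.eq_dec i' 0); [lia|]. pose proof (c_lt c N Hc 0 i' ltac:(lia)). lra.
    - intros Ej. subst j. rewrite HdN in Pb. apply phi_inj in Pb; auto. subst bb.
      destruct (Nat.eq_dec (S i') N); [lia|]. pose proof (c_lt c N Hc (S i') N ltac:(lia)). lra. }
  destruct Hi as [i [Hi [Hia [Hib [Hj1 HjN]]]]].
  assert (Hpc : forall y, Xint d (N + 1) y -> piece d (N + 1) j y ->
     ~ Delta_g lam xi c N y /\
     ((exists z, Xint c N z /\ piece c N i z /\ y = P z) \/
      (exists r, (1 <= r)%nat /\ Gr lam xi r y /\ piece c N i (xi r)))).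
  { intros y [Hy1 Hy2] [Hp1 Hp2]. split.
    - intros HD. destruct (HDk y HD) as [k [Hk Ek]]. subst y.
      destruct (Nat.eqb_spec j 1); destruct (Nat.eqb_spec j (N + 1)); try lia.
      + subst. pose proof (Hdle 1%nat k ltac:(lia)). lra.
      + subst. replace (N + 1 - 1)%nat with N in Hp1 by lia. pose proof (Hdle k N ltac:(lia)). lra.
      + destruct (Compare_dec.le_lt_dec k (j - 1)).
        * pose proof (Hdle k (j - 1)%nat ltac:(lia)). lra.
        * pose proof (Hdle j k ltac:(lia)). lra.
    - assert (Hy : P (c 0%nat) <= y <= P (c N)) by (rewrite <- Hd0, <- HdN; lra).
      assert (Hlow : (j <> 1)%nat -> P a < y).
      { intros hj. destruct (Nat.eqb_spec j 1); [lia|]. rewrite <- Pa. exact Hp1. }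
      assert (Hup : (j <> N + 1)%nat -> y < P bb).
      { intros hj. destruct (Nat.eqb_spec j (N + 1)); [lia|]. rewrite <- Pb. exact Hp2. }
      assert (Hd' : forall n m, (1 <= n)%nat -> (1 <= m)%nat -> xi n = xi m -> n = m).
      { intros n m _ _ E1. destruct (Nat.eq_dec n m); auto. exfalso; apply (Hdist n m); auto. }
      destruct (cover lam xi (c 0%nat) (c N) y Hl ltac:(lra) Hd' Hy) as [[z [Hz Ez]]|[r [Hr Hg]]]; unfold P in *.
      + left. exists z. split; [exact Hz|]. split; [|exact Ez]. split.
        * destruct (Nat.eqb_spec i 1); [lra|].
          assert (a < z). { apply (phi_lt_inv lam xi); auto. rewrite <- Ez. apply Hlow. intros E1; apply n; auto. }
          lra.
        * destruct (Nat.eqb_spec i N); [lra|].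
          assert (z < bb). { apply (phi_lt_inv lam xi); auto. rewrite <- Ez. apply Hup. intros E1; apply n; auto. }
          lra.
      + right. exists r. split; [exact Hr|]. split; [exact Hg|]. destruct Hg as [Gg1 Gg2]. split.
        * destruct (Nat.eqb_spec i 1); [apply HX|].
          assert (a < xi r).
          { destruct (Rlt_dec a (xi r)) as [h|h]; auto. exfalso.
            assert (xi r <> a).
            { intros E1. destruct Ea as [[m [Hm Em]]|Em]; rewrite Em in E1.
              - apply (Hnc r m); auto.
              - apply (Hdist r 0%nat); auto; lia. }
            pose proof (phi_jump lam xi (xi r) a r Hl Hr ltac:(lra)).
            assert (P a < y) by (apply Hlow; intros E1; apply n; auto).
            unfold P in *. lra. }
          lra.
        * destruct (Nat.eqb_spec i N); [apply HX|].
          assert (xi r < bb). { apply (phi_lt_inv lam xi); auto. apply Rlt_trans with y; auto; apply Hup; intros E1; apply n; auto. }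
          lra. }
  assert (Hkey : forall x1, Fmap g (piece d (N + 1)) j (Xint d (N + 1)) (P x1) -> Atom1 f c N i x1).
  { intros x1 Hx1 eps He. destruct (Hx1 eps He) as [w [[y [Yd [Yp Yg]]] Hw]]. subst w.
    destruct (Hpc y Yd Yp) as [ND [[z [Hz [Pz Ez]]]|[r [Hr [Gry Pr]]]]].
    - exists (f z). split. { exists z; auto. } subst y. unfold P in Hw. rewrite (Hg2 z Hz ND) in Hw.
      eapply Rle_lt_trans; [apply (phi_dist lam xi); auto|]. exact Hw.
    - exists (xi (S r)). split. { exists (xi r). split; [apply HX|]. split; [exact Pr|]. symmetry; apply Hxs. }
      rewrite (Hg3 r y Hr Gry) in Hw. destruct Gry as [G1 G2].
      assert (Hq1 : 0 < lam * (y - phi lam xi (xi r))) by (apply Rmult_lt_0_compat; lra).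
      assert (Hq2 : lam * (y - phi lam xi (xi r)) <= lam ^ (S r)) by (simpl; apply Rmult_le_compat_l; lra).
      unfold P in *.
      destruct (Rle_dec x1 (xi (S r))) as [h|h].
      + pose proof (phi_ge lam xi x1 (xi (S r)) Hl h).
        pose proof (phi_dist lam xi (xi (S r)) x1 Hl).
        rewrite Rabs_minus_sym, Rabs_right by lra.
        rewrite Rabs_left1 in Hw by lra.
        lra.
      + pose proof (phi_jump lam xi (xi (S r)) x1 (S r) Hl ltac:(lia) ltac:(lra)).
        rewrite Rabs_right by lra. rewrite Rabs_right in Hw by lra. lra. }
  destruct Dy1 as [x1 [Dx1 Ey1]]. destruct Dy2 as [x2 [Dx2 Ey2]].
  subst y1 y2. apply Hkey in Ay1. apply Hkey in Ay2.
  assert (Hn0 : forall x m, x = xi 0%nat -> Atom1 f c N i x -> DeltaF c N (c m) -> (1 <= m <= N - 1)%nat -> ~ Atom1 f c N i (c m)).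
  { intros x m Ex Ax _ Hm Acm. subst x.
    assert (i = i0).
    { apply (Iv_disj lam b c N i i0 (xi 0%nat)); auto. lra. apply (A1_Iv f lam b c N i); auto. }
    subst i. apply (Hno m Hm Acm). }
  destruct Dx1 as [D1|E1]; destruct Dx2 as [D2|E2].
  - f_equal. apply (Hgen (Atom1 f c N i)); auto. apply (atom1_is f c N i x1); auto.
  - exfalso. destruct D1 as [m [Hm Em]]. subst x1. eapply Hn0; eauto. exists m; auto.
  - exfalso. destruct D2 as [m [Hm Em]]. subst x2. eapply Hn0; eauto. exists m; auto.
  - subst; auto.
Qed.

Theorem lemma9 (N : nat) (c : nat -> R) (f : R -> R) (lam : R) (b : nat -> R) :
  (2 <= N)%nat ->
  (forall i, (i < N)%nat -> c i < c (S i)) ->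
  (forall x, Xint c N x -> Xint c N (f x)) ->
  propP1 f lam b c N -> propP2 lam b c N -> propP3 f c N -> propP4 f lam b c N ->
  propP5 f lam b c N -> propP6 f c N ->
  gen1_atoms_at_most_one f (piece c N) (Xint c N) N (DeltaF c N) ->
  exists xi : nat -> R,
    well_cutting f lam b c N xi /\
    forall (g : R -> R) (d : nat -> R),
      (forall y, phi lam xi (c 0%nat) <= y <= phi lam xi (c N) ->
                 phi lam xi (c 0%nat) <= g y <= phi lam xi (c N)) ->
      (forall x, Xint c N x -> ~ Delta_g lam xi c N (phi lam xi x) ->
                 g (phi lam xi x) = phi lam xi (f x)) ->
      (forall r y, (1 <= r)%nat -> Gr lam xi r y ->
                   g y = lam * (y - phi lam xi (xi r)) + phi lam xi (xi (S r))) ->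
      (forall j, (j < N + 1)%nat -> d j < d (S j)) ->
      (forall y, (exists j, (j <= N + 1)%nat /\ y = d j) <->
                 (exists x, ((exists i, (i <= N)%nat /\ x = c i) \/ x = xi 0%nat)
                            /\ y = phi lam xi x)) ->
      gen1_atoms_at_most_one g (piece d (N + 1)) (Xint d (N + 1)) (N + 1)
                             (Delta_g lam xi c N).
Proof.
  intros HN Hc HfX H1 H2 H3 H4 H5 H6 Hgen.
  destruct (exists_x0 N c f lam b HN Hc HfX H1 H2 H3 H4 H6) as [x0 [i0 [Hi0 [Hno [Ix0 [Lx0 [HX0 Hbad]]]]]]].
  set (xi := fun r => Nat.iter r f x0).
  assert (HX : forall r, Xint c N (xi r)).
  { induction r; [exact HX0|]. unfold xi; simpl. apply HfX. exact IHr. }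
  assert (Hnc : forall r a, xi r <> c a).
  { intros r a E. destruct (B0_c (Lambda_f f c N) f c b lam N a) as [k Hk].
    apply (Hbad r k). rewrite Hk. exact E. }
  assert (Htil : Xtilde f c N x0).
  { intros n. split; [apply (HX n)|]. intros [i [_ E]]. apply (Hnc n i E). }
  assert (Hdist : forall n m, n <> m -> xi n <> xi m).
  { intros n m Hnm E. destruct (Nat.lt_total n m) as [h|[h|h]]; [|lia|].
    - apply (no_period f lam b c N x0 HN Hc H1 H6 Htil n m h E).
    - apply (no_period f lam b c N x0 HN Hc H1 H6 Htil m n h). auto. }
  exists xi. split.
  - split; [intros r; reflexivity|]. split; [exact Lx0|]. split; [exact Htil|].
    intros r. split; [|split; [|split]].
    + intros G. destruct (B0_gap (Lambda_f f c N) f c b lam N (xi r) G) as [k Hk].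
      apply (Hbad r k). rewrite Hk. reflexivity.
    + intros [n En]. destruct (B0_c0 (Lambda_f f c N) f c b lam N n) as [k Hk].
      apply (Hbad r k). rewrite Hk. exact En.
    + intros [n En]. destruct (B0_cN (Lambda_f f c N) f c b lam N n) as [k Hk].
      apply (Hbad r k). rewrite Hk. exact En.
    + intros i Hi. split.
      * intros [n En]. destruct (B0_fl (Lambda_f f c N) f c b lam N n i) as [k Hk].
        apply (Hbad r k). rewrite Hk. exact En.
      * intros [n En]. destruct (B0_fr (Lambda_f f c N) f c b lam N n i) as [k Hk].
        apply (Hbad r k). rewrite Hk. exact En.
  - apply (main_g N c f lam b xi i0 HN Hc H1 H2 Hgen Hi0 Hno Ix0 HX Hnc Hdist).
    intros r; reflexivity.
Qed.
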